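(* There exist constants $C>0$ and $n_0$ such that for every $n\ge n_0$ and every assignment $x:V\to\{-1,1\}$, we have $F_4\ge F_2^2-\frac{C}{n}$, where $F_2=\mathbb E_{(\mathbf v_1,\mathbf v_2)\sim\mathcal D_2}[x_{\mathbf v_1}x_{\mathbf v_2}]$ and $F_4=\mathbb E_{(\mathbf v_1,\dots,\mathbf v_4)\sim\mathcal D_4}[x_{\mathbf v_1}x_{\mathbf v_2}x_{\mathbf v_3}x_{\mathbf v_4}]$.
   Context: Let $\mathbf e_1,\dots,\mathbf e_n$ be the standard basis of $\mathbb R^n$ and $V=\{\frac{1}{\sqrt3}(b_1\mathbf e_i+b_2\mathbf e_j+b_3\mathbf e_k): b_1,b_2,b_3\in\{-1,1\},\ 1\le i<j<k\le n\}$. For $k<n/2$, $\mathcal D_k$ is the distribution on $V^k$ obtained by sampling $2k+1$ distinct indices $i_1,\dots,i_{2k+1}\in[n]$ uniformly at random, sampling independent uniform signs $b_1,\dots,b_{2k+1}\in\{-1,1\}$, and returning $(\mathbf v_1,\dots,\mathbf v_k)$ with $\mathbf v_j=\frac{1}{\sqrt3}(b_1\mathbf e_{i_1}+b_{2j}\mathbf e_{i_{2j}}+b_{2j+1}\mathbf e_{i_{2j+1}})$. *)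

(* Defs.v *)
From HB Require Import structures.
From mathcomp Require Import all_boot all_order all_algebra.
From mathcomp Require Import Rstruct.

Set Implicit Arguments. Unset Strict Implicit. Unset Printing Implicit Defensive.
Import Order.TTheory GRing.Theory Num.Theory.
Local Open Scope ring_scope.

Notation R := Rdefinitions.R.
Definition ebasis (n : nat) (i : 'I_n) : 'rV[R]_n := delta_mx 0 i.

Definition sgnb (b : bool) : R := if b then 1 else -1.

Definition vec3 (n : nat) (i j k : 'I_n) (b1 b2 b3 : bool) : 'rV[R]_n :=
  (Num.sqrt (3 : R))^-1 *: (sgnb b1 *: ebasis i + sgnb b2 *: ebasis j + sgnb b3 *: ebasis k).

Definition inV (n : nat) (v : 'rV[R]_n) : Prop :=
  exists (i j k : 'I_n) (b1 b2 b3 : bool),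
    (nat_of_ord i < nat_of_ord j)%N /\ (nat_of_ord j < nat_of_ord k)%N /\ v = vec3 i j k b1 b2 b3.

(* an assignment x : V -> {-1,1} (values outside V are irrelevant) *)
Definition assignment (n : nat) (x : 'rV[R]_n -> R) : Prop :=
  forall v, inV v -> x v = 1 \/ x v = -1.

(* the sample of D_k determined by the ordered distinct indices I (i_1..i_{2k+1},
   0-based) and signs B; component j (0-based) is
   (1/sqrt3)(b_1 e_{i_1} + b_{2j+2} e_{i_{2j+2}} + b_{2j+3} e_{i_{2j+3}}) in 1-based terms *)
Definition Dsample (n k : nat) (I : {ffun 'I_(k.*2).+1 -> 'I_n})
    (B : {ffun 'I_(k.*2).+1 -> bool}) (j : 'I_k) : 'rV[R]_n :=
  vec3 (I ord0) (I (inord (j.*2).+1)) (I (inord (j.*2).+2))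
       (B ord0) (B (inord (j.*2).+1)) (B (inord (j.*2).+2)).

(* expectation over D_k: uniform over injective index tuples and over sign tuples *)
Definition expD (n k : nat) (f : ('I_k -> 'rV[R]_n) -> R) : R :=
  (\sum_(I : {ffun 'I_(k.*2).+1 -> 'I_n} | injectiveb I)
     \sum_(B : {ffun 'I_(k.*2).+1 -> bool}) f (Dsample I B))
  / (#|[pred I : {ffun 'I_(k.*2).+1 -> 'I_n} | injectiveb I]| * 2 ^ (k.*2).+1)%:R.

Definition Fk (n k : nat) (x : 'rV[R]_n -> R) : R :=
  @expD n k (fun v => \prod_(j < k) x (v j)).

(* Main.v *)
Require Import Defs.
From HB Require Import structures.
From mathcomp Require Import all_boot all_order all_algebra.
From mathcomp Require Import Rstruct.
From mathcomp Require Import zify ring lra.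

Set Implicit Arguments. Unset Strict Implicit. Unset Printing Implicit Defensive.
Import Order.TTheory GRing.Theory Num.Theory.
Local Open Scope ring_scope.

Lemma vec3_s12 n (i j k : 'I_n) b1 b2 b3 : vec3 i j k b1 b2 b3 = vec3 j i k b2 b1 b3.
Proof. by rewrite /vec3 (addrC (sgnb b1 *: _)). Qed.
Lemma vec3_s23 n (i j k : 'I_n) b1 b2 b3 : vec3 i j k b1 b2 b3 = vec3 i k j b1 b3 b2.
Proof. by rewrite /vec3 -!addrA (addrC (sgnb b2 *: _)). Qed.

Lemma inV_vec3 n (i j k : 'I_n) b1 b2 b3 :
  (i : nat) <> j -> (i : nat) <> k -> (j : nat) <> k -> inV (vec3 i j k b1 b2 b3).
Proof.
have S : forall (i j k : 'I_n) b1 b2 b3, (i < j)%N -> (j < k)%N -> inV (vec3 i j k b1 b2 b3).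
  by move=> i' j' k' c1 c2 c3 h1 h2; exists i', j', k', c1, c2, c3.
move=> h1 h2 h3.
case: (ltngtP i j) => ij; case: (ltngtP j k) => jk; case: (ltngtP i k) => ik; try lia.
- by apply: S.
- by rewrite vec3_s23; apply: S.
- by rewrite vec3_s23 vec3_s12; apply: S.
- by rewrite vec3_s12; apply: S.
- by rewrite vec3_s12 vec3_s23; apply: S.
- by rewrite vec3_s12 vec3_s23 vec3_s12; apply: S.
Qed.

Definition Xt n (x : 'rV[R]_n -> R) (a b c : 'I_n * bool) : R :=
  if [&& a.1 != b.1, a.1 != c.1 & b.1 != c.1]
  then x (vec3 a.1 b.1 c.1 a.2 b.2 c.2) else 0.

Lemma Xt_bound n (x : 'rV[R]_n -> R) a b c : assignment x -> `|Xt x a b c| <= 1.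
Proof.
move=> hx; rewrite /Xt; case: ifP => [/and3P [h1 h2 h3]|_]; last by rewrite normr0.
have : inV (vec3 a.1 b.1 c.1 a.2 b.2 c.2).
  by apply: inV_vec3; apply/eqP; rewrite val_eqE.
by case/hx => ->; rewrite ?normrN normr1.
Qed.

Definition idx1 k (j : 'I_k) : 'I_(k.*2).+1 := inord (j.*2).+1.
Definition idx2 k (j : 'I_k) : 'I_(k.*2).+1 := inord (j.*2).+2.

Lemma idx1E k (j : 'I_k) : (idx1 j : nat) = (j.*2).+1.
Proof. rewrite /idx1 inordK //; have := ltn_ord j; lia. Qed.
Lemma idx2E k (j : 'I_k) : (idx2 j : nat) = (j.*2).+2.
Proof. rewrite /idx2 inordK //; have := ltn_ord j; lia. Qed.

Lemma idx_cover k (i : 'I_(k.*2).+1) :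
  i = ord0 \/ exists j : 'I_k, i = idx1 j \/ i = idx2 j.
Proof.
case: (posnP i) => hi; [left; exact: ord_inj | right].
have hj : ((i.-1) %/ 2 < k)%N by have := ltn_ord i; lia.
exists (Ordinal hj).
case: (eqVneq ((i.-1) %% 2)%N 0%N) => h; [left|right]; apply: ord_inj;
  rewrite ?idx1E ?idx2E /=; lia.
Qed.

Definition Pt n k (x : 'rV[R]_n -> R) (I : {ffun 'I_(k.*2).+1 -> 'I_n})
  (B : {ffun 'I_(k.*2).+1 -> bool}) : R :=
  \prod_(j < k) Xt x (I ord0, B ord0) (I (idx1 j), B (idx1 j)) (I (idx2 j), B (idx2 j)).

Lemma Pt_bound n k x I B : assignment x -> `|@Pt n k x I B| <= 1.
Proof.
move=> hx; rewrite /Pt normr_prod.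
apply: (@le_trans _ _ (\prod_(j < k) (1:R))); last by rewrite big1.
apply: ler_prod => j _; rewrite normr_ge0 /=; exact: Xt_bound.
Qed.

Lemma P_eq n k (x : 'rV[R]_n -> R) (I : {ffun 'I_(k.*2).+1 -> 'I_n})
  (B : {ffun 'I_(k.*2).+1 -> bool}) : injectiveb I ->
  \prod_(j < k) x (@Dsample n k I B j) = Pt x I B.
Proof.
move=> /injectiveP hI; apply: eq_bigr => j _.
rewrite /Pt /Xt /Dsample /=.
have d : forall a b : 'I_(k.*2).+1, (a : nat) <> b -> I a != I b.
  by move=> a b ab; apply/eqP => /hI e; apply: ab; rewrite e.
rewrite !d //= -/(idx1 j) -/(idx2 j) ?idx1E ?idx2E //.
Qed.

Definition Hs n (x : 'rV[R]_n -> R) (l0 : 'I_n * bool) : R :=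
  \sum_(p : ('I_n * bool) * ('I_n * bool)) Xt x l0 p.1 p.2.

Definition psi n k (p : {ffun 'I_(k.*2).+1 -> 'I_n} * {ffun 'I_(k.*2).+1 -> bool}) :
  ('I_n * bool) * {ffun 'I_k -> ('I_n * bool) * ('I_n * bool)} :=
  ((p.1 ord0, p.2 ord0),
   [ffun j => ((p.1 (idx1 j), p.2 (idx1 j)), (p.1 (idx2 j), p.2 (idx2 j)))]).

Lemma psi_inj n k : injective (@psi n k).
Proof.
move=> [I B] [I' B']; rewrite /psi /= => -[e1 e2 ef].
have h (j : 'I_k) := congr1 (fun f : {ffun 'I_k -> _} => f j) ef.
have E : forall i, I i = I' i /\ B i = B' i.
  move=> i; case: (idx_cover i) => [->|[j [->|->]]]; first by [].
  - by have := h j; rewrite !ffunE => -[-> -> _ _].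
  - by have := h j; rewrite !ffunE => -[_ _ -> ->].
by congr pair; apply/ffunP => i; case: (E i).
Qed.

Lemma psi_bij n k : bijective (@psi n k).
Proof.
apply: inj_card_bij; first exact: psi_inj.
rewrite !card_prod !card_ffun !card_prod !card_ord card_bool.
rewrite -expnMn expnS -mul2n expnM mulnn leqnn //.
Qed.

Lemma Sall_eq n k (x : 'rV[R]_n -> R) :
  \sum_(I : {ffun 'I_(k.*2).+1 -> 'I_n}) \sum_(B : {ffun 'I_(k.*2).+1 -> bool}) Pt x I B
  = \sum_(l0 : 'I_n * bool) (Hs x l0) ^+ k.
Proof.
rewrite pair_bigA /=.
pose G (y : ('I_n * bool) * {ffun 'I_k -> ('I_n * bool) * ('I_n * bool)}) :=
  \prod_(j < k) Xt x y.1 (y.2 j).1 (y.2 j).2.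
transitivity (\sum_p G (@psi n k p)).
  by apply: eq_bigr => p _; rewrite /G /Pt; apply: eq_bigr => j _; rewrite ffunE.
have -> : \sum_p G (@psi n k p) = \sum_y G y.
  by rewrite [RHS](reindex (@psi n k)) //; apply: onW_bij; exact: psi_bij.
transitivity (\sum_a \sum_b G (a, b)); first by rewrite pair_bigA; apply: eq_bigr => -[a b].
apply: eq_bigr => l0 _.
rewrite /G /= -(bigA_distr_bigA (fun j p => Xt x l0 p.1 p.2)) /=.
by rewrite prodr_const card_ord.
Qed.

Lemma ffact_le n m : (n ^_ m <= n ^ m)%N.
Proof.
elim: m => [|m IH]; first by rewrite ffactn0 expn0.
rewrite ffactnSr expnS mulnC; apply: leq_mul => //; exact: leq_subr.
Qed.

Lemma ffact_gap n m : (n ^ m.+1 <= n ^_ m.+1 + m.+1 ^ 2 * n ^ m)%N.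
Proof.
elim: m => [|m IH]; first by rewrite expn1 ffactn1 expn0; lia.
have h1 : (n ^_ m.+1 * n <= n ^_ m.+2 + m.+1 * n ^_ m.+1)%N.
  rewrite (ffactnSr n m.+1) (mulnC m.+1) -mulnDr; apply: leq_mul => //; lia.
have h2 := ffact_le n m.+1.
rewrite (expnS n m.+1) mulnC.
have h3 : (n ^ m.+1 * n <= (n ^_ m.+1 + m.+1 ^ 2 * n ^ m) * n)%N by rewrite leq_mul2r IH orbT.
rewrite mulnDl -mulnA -expnSr in h3.
rewrite -expnSr in h3; rewrite -expnSr in h3 *.
rewrite expnSr in h3 *.
have h4 : (m.+1 * n ^_ m.+1 <= m.+1 * n ^ m.+1)%N by rewrite leq_mul2l h2 orbT.
move: h1 h3 h4; set X := (n ^ m.+1)%N; set f1 := (n ^_ m.+1)%N; set f2 := (n ^_ m.+2)%N.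
rewrite !expnS !expn0 !muln1 => h1 h3 h4; nia.
Qed.

Lemma real_close (a b M N p : R) : 0 < M -> M <= N -> 0 < p ->
  `|a| <= M * p -> `|b| <= (N - M) * p ->
  `|a / (M * p) - (a + b) / (N * p)| <= 2 * (N - M) / N.
Proof.
move=> hM hMN hp ha hb.
have hN : 0 < N by apply: lt_le_trans hMN.
have -> : a / (M * p) - (a + b) / (N * p) = (a * (N - M) - b * M) / (M * N * p).
  by field; rewrite !gt_eqF.
have hq : 0 < M * N * p by rewrite !mulr_gt0.
rewrite normrM (gtr0_norm (_ : 0 < (M * N * p)^-1)) ?invr_gt0 // ler_pdivrMr //.
apply: le_trans (ler_normB _ _) _.
rewrite !normrM (ger0_norm (ltW hM)) (ger0_norm (_ : 0 <= N - M)) ?subr_ge0 //.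
have e : 2 * (N - M) / N * (M * N * p) = 2 * ((N - M) * M * p).
  by field; rewrite !gt_eqF.
rewrite e.
have h1 : `|a| * (N - M) <= M * p * (N - M) by apply: ler_wpM2r; rewrite ?subr_ge0.
have h2 : `|b| * M <= (N - M) * p * M by apply: ler_wpM2r => //; exact: ltW.
lra.
Qed.

Lemma sum_bound (T1 T2 : finType) (P : pred T1) (F : T1 -> T2 -> R) :
  (forall a b, `|F a b| <= 1) ->
  `|\sum_(a | P a) \sum_b F a b| <= (#|P| * #|T2|)%:R.
Proof.
move=> hF; apply: le_trans (ler_norm_sum _ _ _) _.
apply: le_trans (@ler_sum _ _ _ _ _ (fun _ => #|T2|%:R) _) _.
  move=> a _; apply: le_trans (ler_norm_sum _ _ _) _.
  apply: le_trans (@ler_sum _ _ _ _ _ (fun _ => 1) _) _; first by move=> b _; exact: hF.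
  by rewrite sumr_const.
by rewrite sumr_const natrM mulr_natl.
Qed.

Definition Gk n k (x : 'rV[R]_n -> R) : R :=
  (\sum_(l0 : 'I_n * bool) (Hs x l0) ^+ k) / (n ^ (k.*2).+1 * 2 ^ (k.*2).+1)%:R.

Lemma Fk_close n k (x : 'rV[R]_n -> R) : assignment x -> ((k.*2).+1 <= n)%N ->
  `|@Fk n k x - Gk k x| <= 2 * (((k.*2).+1) ^ 2)%:R / n%:R
  /\ `|@Fk n k x| <= 1 /\ `|Gk k x| <= 1.
Proof.
move=> hx hn.
set m := (k.*2).+1.
have n0 : (0 < n)%N by apply: leq_trans hn.
set Sinj := \sum_(I : {ffun 'I_m -> 'I_n} | injectiveb I) \sum_(B : {ffun 'I_m -> bool}) Pt x I B.
set Snon := \sum_(I : {ffun 'I_m -> 'I_n} | ~~ injectiveb I) \sum_(B : {ffun 'I_m -> bool}) Pt x I B.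
have cM : #|[pred I : {ffun 'I_m -> 'I_n} | injectiveb I]| = (n ^_ m)%N.
  transitivity #|[set f : {ffun 'I_m -> 'I_n} | injectiveb f]|.
    by apply: eq_card => f; rewrite inE.
  by rewrite card_inj_ffuns !card_ord.
have cN : #|[pred I : {ffun 'I_m -> 'I_n} | ~~ injectiveb I]| = (n ^ m - n ^_ m)%N.
  have := cardC [pred I : {ffun 'I_m -> 'I_n} | injectiveb I].
  rewrite card_ffun !card_ord cM => <-; rewrite addKn; by apply: eq_card => f.
have eF : @Fk n k x = Sinj / ((n ^_ m) * 2 ^ m)%:R.
  rewrite /Fk /expD cM; congr (_ / _).
  apply: eq_bigr => I hI; apply: eq_bigr => B _; exact: P_eq.
have eS : \sum_(l0 : 'I_n * bool) (Hs x l0) ^+ k = Sinj + Snon.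
  by rewrite -Sall_eq [LHS](bigID (fun I : {ffun 'I_m -> 'I_n} => injectiveb I)). 
have bF : forall (a : {ffun 'I_m -> 'I_n}) (b : {ffun 'I_m -> bool}), `|Pt x a b| <= 1 by move=> a b; exact: Pt_bound.
have hSinj : `|Sinj| <= (n ^_ m)%:R * (2 ^ m)%:R.
  by rewrite -natrM; have := sum_bound [pred I : {ffun 'I_m -> 'I_n} | injectiveb I] bF; rewrite cM card_ffun card_bool card_ord.
have hSnon : `|Snon| <= ((n ^ m)%:R - (n ^_ m)%:R) * (2 ^ m)%:R.
  rewrite -natrB ?ffact_le // -natrM.
  by have := sum_bound [pred I : {ffun 'I_m -> 'I_n} | ~~ injectiveb I] bF; rewrite cN card_ffun card_bool card_ord.
have hM : 0 < (n ^_ m)%:R :> R by rewrite ltr0n ffact_gt0.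
have hMN : (n ^_ m)%:R <= (n ^ m)%:R :> R by rewrite ler_nat ffact_le.
have hp : 0 < (2 ^ m)%:R :> R by rewrite ltr0n expn_gt0.
have hG : Gk k x = (Sinj + Snon) / ((n ^ m)%:R * (2 ^ m)%:R) by rewrite /Gk eS natrM.
have hN : 0 < (n ^ m)%:R :> R by apply: lt_le_trans hMN.
split; last split.
- rewrite eF hG natrM; apply: le_trans (real_close hM hMN hp hSinj hSnon) _.
  rewrite -!mulrA ler_pM2l // ler_pdivrMr // mulrAC ler_pdivlMr ?ltr0n //.
  have g := ffact_gap n (k.*2).
  rewrite -natrB ?ffact_le // -!natrM ler_nat.
  rewrite -/m in g; rewrite /m expnSr in g *.
  move: g; set A := (n ^ k.*2)%N; set f := (n ^_ k.*2.+1)%N => g.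
  have g' := leq_mul g (leqnn n).
  nia.
- rewrite eF normrM normfV normr_nat natrM.
  by rewrite ler_pdivrMr ?mulr_gt0 // mul1r.
- rewrite hG normrM normfV normrM !normr_nat ler_pdivrMr ?mulr_gt0 // mul1r.
  apply: le_trans (ler_normD _ _) _.
  by have := lerD hSinj hSnon; rewrite -mulrDl (addrC (n ^_ m)%:R) subrK.
Qed.

Lemma cs_sum (T : finType) (a : T -> R) :
  (\sum_i a i) ^+ 2 <= #|T|%:R * \sum_i a i ^+ 2.
Proof.
set S := \sum_i a i; set Q := \sum_i a i ^+ 2.
have h : 0 <= \sum_i \sum_j (a i - a j) ^+ 2.
  by apply: sumr_ge0 => i _; apply: sumr_ge0 => j _; exact: sqr_ge0.
have e : forall i, \sum_j (a i - a j) ^+ 2 = #|T|%:R * a i ^+ 2 - 2 * a i * S + Q.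
  move=> i.
  transitivity (\sum_j (a i ^+ 2 - 2 * a i * a j + a j ^+ 2)).
    by apply: eq_bigr => j _; ring.
  by rewrite big_split /= sumrB sumr_const -mulr_sumr -/Q -/S (mulr_natl (a i ^+ 2)).
rewrite (eq_bigr _ (fun i _ => e i)) in h.
rewrite big_split /= sumrB -mulr_sumr -/Q -mulr_suml -mulr_sumr -/S sumr_const -mulr_natl in h.
nra.
Qed.

Lemma G_cs n (x : 'rV[R]_n -> R) : (0 < n)%N -> (Gk 2 x) ^+ 2 <= Gk 4 x.
Proof.
move=> n0.
have hc := cs_sum (fun l0 : 'I_n * bool => Hs x l0 ^+ 2).
rewrite card_prod card_ord card_bool in hc.
rewrite /Gk -!expnMn /=.
set N := (n * 2)%N in hc *.
have hN : 0 < N%:R :> R by rewrite ltr0n muln_gt0 n0.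
rewrite !natrX.
set S2 := \sum_l0 Hs x l0 ^+ 2 in hc *.
have -> : \sum_l0 Hs x l0 ^+ 4 = \sum_l0 (Hs x l0 ^+ 2) ^+ 2.
  by apply: eq_bigr => l0 _; rewrite -exprM.
set S4 := \sum_l0 (Hs x l0 ^+ 2) ^+ 2 in hc *.
rewrite expr_div_n -exprM /= ler_pdivrMr ?exprn_gt0 //.
rewrite (_ : S4 / N%:R ^+ 9 * N%:R ^+ 10 = S4 * N%:R); last first.
  by field; rewrite gt_eqF.
by rewrite mulrC.
Qed.

Theorem mainTheorem8 :
  exists (C : R) (n0 : nat), 0 < C /\
    forall (n : nat) (x : 'rV[R]_n -> R), (n0 <= n)%N -> assignment x ->
      @Fk n 4 x >= (@Fk n 2 x) ^+ 2 - C / n%:R.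
Proof.
exists 262, 9%N; split; first by rewrite ltr0n.
move=> n x hn hx.
have hn0 : (0 < n)%N by apply: leq_trans hn.
have [d4 [f4 g4]] := @Fk_close n 4 x hx hn.
have [d2 [f2 g2]] := @Fk_close n 2 x hx (leq_trans (isT : (5 <= 9)%N) hn).
have cs := G_cs x hn0.
have hv : 0 < n%:R^-1 :> R by rewrite invr_gt0 ltr0n.
move: d4 d2 f2 g2 cs.
rewrite (_ : (4.*2.+1 ^ 2)%N = 81%N) // (_ : (2.*2.+1 ^ 2)%N = 25%N) //.
set v := n%:R^-1; set F4 := Fk 4 x; set F2 := Fk 2 x; set G4 := Gk 4 x; set G2 := Gk 2 x.
move=> /ler_normlP [d4a d4b] /ler_normlP [d2a d2b] /ler_normlP [f2a f2b] /ler_normlP [g2a g2b] cs.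
rewrite -/v in hv.
nra.
Qed.
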